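(* Let $E\subseteq\mathbb{R}$ and let $f:E\to\mathbb{R}$ be Abel continuous on $E$. Then $f$ is statistically continuous on $E$.
   Context: A sequence $(p_n)$ of real numbers is Abel convergent to $\ell$ if $\sum_{k=0}^{\infty}p_k x^k$ converges for every $0\le x<1$ and $\lim_{x\to 1^-}(1-x)\sum_{k=0}^{\infty}p_k x^k=\ell$. $f$ is Abel continuous on $E$ if for every sequence $(p_n)$ in $E$ Abel convergent to some $\ell\in E$, $(f(p_n))$ is Abel convergent to $f(\ell)$. A sequence $(p_k)$ is statistically convergent to $\ell$ if for every $\varepsilon>0$, $\lim_{n\to\infty}\frac1n|\{k\le n:|p_k-\ell|\ge\varepsilon\}|=0$. $f$ is statistically continuous on $E$ if for every sequence $(p_n)$ in $E$ statistically convergent to some $\ell\in E$, the sequence $(f(p_n))$ is statistically convergent to $f(\ell)$. *)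

(* Defs.v *)
From Stdlib Require Import Reals.
From Coquelicot Require Import Coquelicot.
Open Scope R_scope.

Definition abel_convergent (p : nat -> R) (l : R) : Prop :=
  (forall x : R, 0 <= x < 1 -> ex_series (fun k => p k * x ^ k)) /\
  filterlim (fun x => (1 - x) * Series (fun k => p k * x ^ k))
            (at_left 1) (locally l).

Definition bad_count (p : nat -> R) (l eps : R) (n : nat) : R :=
  sum_n (fun k => if Rle_dec eps (Rabs (p k - l)) then 1 else 0) n.

Definition stat_convergent (p : nat -> R) (l : R) : Prop :=
  forall eps : R, 0 < eps ->
    is_lim_seq (fun n => bad_count p l eps n / INR n) 0.

Definition abel_continuous (E : R -> Prop) (f : R -> R) : Prop :=
  forall (p : nat -> R) (l : R), (forall n, E (p n)) -> E l ->
    abel_convergent p l -> abel_convergent (fun n => f (p n)) (f l).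

Definition stat_continuous (E : R -> Prop) (f : R -> R) : Prop :=
  forall (p : nat -> R) (l : R), (forall n, E (p n)) -> E l ->
    stat_convergent p l -> stat_convergent (fun n => f (p n)) (f l).

(* Main.v *)
Require Import Defs.
From Stdlib Require Import Reals Lra Lia Classical ClassicalEpsilon.
From Coquelicot Require Import Coquelicot.
Open Scope R_scope.

Lemma half_pow_le1 (k : nat) : 0 <= (/2)^k <= 1.
Proof.
  induction k as [|k IH]; simpl; lra.
Qed.

Lemma pow_le1 (y : R) (n : nat) : 0 <= y <= 1 -> y ^ n <= 1.
Proof.
  intros Hy. induction n as [|n IH]; simpl; [lra|].
  assert (0 <= y ^ n) by (apply pow_le; lra). nra.
Qed.

Lemma exs_const (c y : R) : 0 <= y < 1 -> ex_series (fun k => c * y ^ k).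
Proof.
  intros Hy.
  assert (H := ex_series_scal_l c (fun k => y ^ k) (ex_series_geom y ltac:(rewrite Rabs_pos_eq; lra))).
  exact H.
Qed.

Lemma ser_const (c y : R) : 0 <= y < 1 -> Series (fun k => c * y ^ k) = c / (1 - y).
Proof.
  intros Hy. rewrite Series_scal_l. change (Series (pow y)) with (Series (fun n => y ^ n)).
  rewrite (is_series_unique _ _ (is_series_geom y ltac:(rewrite Rabs_pos_eq; lra))).
  reflexivity.
Qed.

Lemma ser_cmp (a b : nat -> R) (y : R) : 0 <= y < 1 ->
  ex_series (fun k => a k * y ^ k) -> ex_series (fun k => b k * y ^ k) ->
  (forall k, a k <= b k) ->
  Series (fun k => a k * y ^ k) <= Series (fun k => b k * y ^ k).
Proof.
  intros Hy Ha Hb Hab.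
  assert (Hd : ex_series (fun k => (b k - a k) * y ^ k)).
  { apply ex_series_ext with (fun k => plus (b k * y ^ k) (scal (-1) (a k * y ^ k))).
    - intro k. unfold plus, scal; simpl. unfold mult; simpl. ring.
    - apply (ex_series_plus (K:=R_AbsRing) (V:=R_NormedModule)); [exact Hb | apply (ex_series_scal_l (K:=R_AbsRing) (V:=R_NormedModule)); exact Ha]. }
  assert (H0 : 0 <= Series (fun k => (b k - a k) * y ^ k)).
  { assert (E0 : Series (fun k : nat => 0 * (y ^ k)) = 0).
    { rewrite Series_scal_l. ring. }
    rewrite <- E0. apply Series_le; [|exact Hd].
    intro n. rewrite Rmult_0_l. split; [lra|]. apply Rmult_le_pos; [specialize (Hab n); lra | apply pow_le; lra]. }
  assert (Eb : Series (fun k => b k * y ^ k) =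
     Series (fun k => a k * y ^ k) + Series (fun k => (b k - a k) * y ^ k)).
  { rewrite <- Series_plus by assumption. apply Series_ext. intro; ring. }
  lra.
Qed.

Lemma abel_ge (q : nat -> R) (m c : R) : abel_convergent q m ->
  (forall k, c <= q k) -> c <= m.
Proof.
  intros [Hex Hlim] Hc.
  assert (H := filterlim_le (F := at_left 1) (fun _ => c)
     (fun x => (1 - x) * Series (fun k => q k * x ^ k)) c m).
  apply H.
  - exists (mkposreal 1 Rlt_0_1). intros y Hy Hy1. simpl in Hy.
    unfold ball in Hy; simpl in Hy; unfold AbsRing_ball, abs, minus, plus, opp in Hy; simpl in Hy.
    apply Rabs_def2 in Hy.
    assert (Hy' : 0 <= y < 1) by lra.
    assert (Hs := ser_cmp (fun _ => c) q y Hy' (exs_const c y Hy') (Hex y Hy') Hc).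
    simpl in Hs. rewrite ser_const in Hs by exact Hy'.
    assert (E : c = (1 - y) * (c / (1 - y))) by (field; lra).
    rewrite E at 1. apply Rmult_le_compat_l; lra.
  - apply filterlim_const.
  - exact Hlim.
Qed.

Lemma abel_le (q : nat -> R) (m c : R) : abel_convergent q m ->
  (forall k, q k <= c) -> m <= c.
Proof.
  intros [Hex Hlim] Hc.
  assert (H := filterlim_le (F := at_left 1)
     (fun x => (1 - x) * Series (fun k => q k * x ^ k)) (fun _ => c) m c).
  apply H.
  - exists (mkposreal 1 Rlt_0_1). intros y Hy Hy1. simpl in Hy.
    unfold ball in Hy; simpl in Hy; unfold AbsRing_ball, abs, minus, plus, opp in Hy; simpl in Hy.
    apply Rabs_def2 in Hy.
    assert (Hy' : 0 <= y < 1) by lra.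
    assert (Hs := ser_cmp q (fun _ => c) y Hy' (Hex y Hy') (exs_const c y Hy') Hc).
    simpl in Hs. rewrite ser_const in Hs by exact Hy'.
    assert (E : c = (1 - y) * (c / (1 - y))) by (field; lra).
    rewrite E at 1. apply Rmult_le_compat_l; lra.
  - exact Hlim.
  - apply filterlim_const.
Qed.

Lemma abel_of_geo (x : nat -> R) (l : R) :
  (forall n, Rabs (x n - l) <= (/2)^n) -> abel_convergent x l.
Proof.
  intros Hx.
  assert (Hexd : forall y, 0 <= y < 1 -> ex_series (fun k => (x k - l) * y ^ k)).
  { intros y Hy. apply (ex_series_le (K:=R_AbsRing) (V:=R_CompleteNormedModule)) with (fun k => (/2)^k).
    - intro n. change (norm ((x n - l) * y ^ n)) with (Rabs ((x n - l) * y ^ n)).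
      rewrite Rabs_mult, (Rabs_pos_eq (y ^ n)) by (apply pow_le; lra).
      assert (y ^ n <= 1) by (apply pow_le1; lra).
      assert (H0 := Rabs_pos (x n - l)). specialize (Hx n).
      nra.
    - apply ex_series_geom. rewrite Rabs_pos_eq; lra. }
  assert (Hex : forall y, 0 <= y < 1 -> ex_series (fun k => x k * y ^ k)).
  { intros y Hy. apply ex_series_ext with (fun k => plus (l * y ^ k) ((x k - l) * y ^ k)).
    - intro k. unfold plus; simpl. ring.
    - apply (ex_series_plus (K:=R_AbsRing) (V:=R_NormedModule)); [apply exs_const; exact Hy | apply Hexd; exact Hy]. }
  set (G := Series (fun k : nat => (/2)^k)).
  assert (HG : 0 <= G).
  { unfold G. rewrite (is_series_unique _ _ (is_series_geom (/2) ltac:(rewrite Rabs_pos_eq; lra))). lra. }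
  assert (Hb : forall y, 0 <= y < 1 ->
     Rabs ((1 - y) * Series (fun k => x k * y ^ k) - l) <= (1 - y) * G).
  { intros y Hy.
    assert (E : Series (fun k => x k * y ^ k) =
                Series (fun k => l * y ^ k) + Series (fun k => (x k - l) * y ^ k)).
    { rewrite <- Series_plus by (try apply exs_const; try apply Hexd; exact Hy).
      apply Series_ext. intro; ring. }
    rewrite E, ser_const by exact Hy.
    replace ((1 - y) * (l / (1 - y) + Series (fun k : nat => (x k - l) * y ^ k)) - l)
      with ((1 - y) * Series (fun k : nat => (x k - l) * y ^ k)) by (field; lra).
    rewrite Rabs_mult, (Rabs_pos_eq (1 - y)) by lra.
    apply Rmult_le_compat_l; [lra|].
    assert (Habs : ex_series (fun k => Rabs ((x k - l) * y ^ k))).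
    { apply (ex_series_le (K:=R_AbsRing) (V:=R_CompleteNormedModule)) with (fun k => (/2)^k).
      - intro n. change (norm (Rabs ((x n - l) * y ^ n))) with (Rabs (Rabs ((x n - l) * y ^ n))).
        rewrite Rabs_Rabsolu.
        rewrite Rabs_mult, (Rabs_pos_eq (y ^ n)) by (apply pow_le; lra).
        assert (y ^ n <= 1) by (apply pow_le1; lra).
        assert (H0 := Rabs_pos (x n - l)). specialize (Hx n).
        nra.
      - apply ex_series_geom. rewrite Rabs_pos_eq; lra. }
    eapply Rle_trans; [apply Series_Rabs; exact Habs|].
    unfold G. apply Series_le.
    - intro n. split; [apply Rabs_pos|].
      rewrite Rabs_mult, (Rabs_pos_eq (y ^ n)) by (apply pow_le; lra).
      assert (y ^ n <= 1) by (apply pow_le1; lra).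
      assert (H0 := Rabs_pos (x n - l)). specialize (Hx n).
      assert (0 <= y ^ n) by (apply pow_le; lra).
      nra.
    - apply ex_series_geom. rewrite Rabs_pos_eq; lra. }
  split; [exact Hex|].
  apply filterlim_locally. intros eps.
  assert (Hd : 0 < Rmin 1 (eps / (G + 1))).
  { apply Rmin_pos; [lra|]. apply Rdiv_lt_0_compat; [apply cond_pos | lra]. }
  exists (mkposreal _ Hd). intros y Hy Hy1. simpl in Hy.
  unfold ball in Hy; simpl in Hy; unfold AbsRing_ball, abs, minus, plus, opp in Hy; simpl in Hy.
  apply Rabs_def2 in Hy. destruct Hy as [Hy2 Hy3].
  assert (Hm1 := Rmin_l 1 (eps / (G + 1))).
  assert (Hm2 := Rmin_r 1 (eps / (G + 1))).
  assert (Hy' : 0 <= y < 1) by lra.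
  unfold ball; simpl; unfold AbsRing_ball, abs, minus, plus, opp; simpl.
  eapply Rle_lt_trans; [apply Hb; exact Hy'|].
  assert (Hlt : 1 - y < eps / (G + 1)) by lra.
  assert (Hpos := cond_pos eps).
  apply Rmult_lt_compat_r with (r := G + 1) in Hlt; [|lra].
  unfold Rdiv in Hlt. rewrite Rmult_assoc, Rinv_l, Rmult_1_r in Hlt by lra.
  nra.
Qed.

Lemma upper_cont (E : R -> Prop) (f : R -> R) (l eps : R) :
  abel_continuous E f -> E l -> 0 < eps ->
  exists d, 0 < d /\ forall x, E x -> Rabs (x - l) < d -> f x < f l + eps.
Proof.
  intros Hf El He. apply NNPP. intro Hn.
  assert (Hall : forall n : nat, exists x, E x /\ Rabs (x - l) < (/2)^(S n) /\ f l + eps <= f x).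
  { intro n. apply NNPP. intro H'. apply Hn. exists ((/2)^(S n)). split.
    - apply pow_lt; lra.
    - intros x Ex Hx. apply Rnot_le_lt. intro Hle. apply H'. exists x; auto. }
  set (xs := fun n => proj1_sig (constructive_indefinite_description _ (Hall n))).
  assert (Hxs : forall n, E (xs n) /\ Rabs (xs n - l) < (/2)^(S n) /\ f l + eps <= f (xs n)).
  { intro n. unfold xs. destruct (constructive_indefinite_description _ (Hall n)) as [x Hx]. exact Hx. }
  assert (Ha : abel_convergent xs l).
  { apply abel_of_geo. intro n. destruct (Hxs n) as [_ [H _]]. simpl in H.
    assert (0 <= (/2)^n) by (apply pow_le; lra). lra. }
  assert (Hfa := Hf xs l (fun n => proj1 (Hxs n)) El Ha).
  assert (Hc := abel_ge _ _ (f l + eps) Hfa (fun k => proj2 (proj2 (Hxs k)))).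
  lra.
Qed.

Lemma lower_cont (E : R -> Prop) (f : R -> R) (l eps : R) :
  abel_continuous E f -> E l -> 0 < eps ->
  exists d, 0 < d /\ forall x, E x -> Rabs (x - l) < d -> f l - eps < f x.
Proof.
  intros Hf El He. apply NNPP. intro Hn.
  assert (Hall : forall n : nat, exists x, E x /\ Rabs (x - l) < (/2)^(S n) /\ f x <= f l - eps).
  { intro n. apply NNPP. intro H'. apply Hn. exists ((/2)^(S n)). split.
    - apply pow_lt; lra.
    - intros x Ex Hx. apply Rnot_le_lt. intro Hle. apply H'. exists x; auto. }
  set (xs := fun n => proj1_sig (constructive_indefinite_description _ (Hall n))).
  assert (Hxs : forall n, E (xs n) /\ Rabs (xs n - l) < (/2)^(S n) /\ f (xs n) <= f l - eps).
  { intro n. unfold xs. destruct (constructive_indefinite_description _ (Hall n)) as [x Hx]. exact Hx. }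
  assert (Ha : abel_convergent xs l).
  { apply abel_of_geo. intro n. destruct (Hxs n) as [_ [H _]]. simpl in H.
    assert (0 <= (/2)^n) by (apply pow_le; lra). lra. }
  assert (Hfa := Hf xs l (fun n => proj1 (Hxs n)) El Ha).
  assert (Hc := abel_le _ _ (f l - eps) Hfa (fun k => proj2 (proj2 (Hxs k)))).
  lra.
Qed.

Theorem corollary2 (E : R -> Prop) (f : R -> R) :
  abel_continuous E f -> stat_continuous E f.
Proof.
  intros Hf p l Hp El Hs eps He.
  destruct (upper_cont E f l eps Hf El He) as [d1 [Hd1 H1]].
  destruct (lower_cont E f l eps Hf El He) as [d2 [Hd2 H2]].
  set (d := Rmin d1 d2).
  assert (Hd : 0 < d) by (apply Rmin_pos; lra).
  assert (Hm1 : d <= d1) by apply Rmin_l. assert (Hm2 : d <= d2) by apply Rmin_r. clearbody d.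
  apply is_lim_seq_le_le with (u := fun _ => 0) (w := fun n => bad_count p l d n / INR n).
  - intro n.
    assert (Hinv : 0 <= / INR n).
    { destruct n as [|n]. simpl. rewrite Rinv_0. lra.
      left. apply Rinv_0_lt_compat. apply lt_0_INR. lia. }
    unfold bad_count. rewrite !sum_n_Reals. split.
    + apply Rmult_le_pos; [|exact Hinv]. apply cond_pos_sum. intro k.
      destruct (Rle_dec _ _); lra.
    + apply Rmult_le_compat_r; [exact Hinv|]. apply sum_Rle. intros k _.
      destruct (Rle_dec eps (Rabs (f (p k) - f l))) as [Hb|Hb];
      destruct (Rle_dec d (Rabs (p k - l))) as [Hc|Hc]; try lra.
      exfalso. apply Rnot_le_lt in Hc.
      assert (A1 := H1 (p k) (Hp k) ltac:(lra)).
      assert (A2 := H2 (p k) (Hp k) ltac:(lra)).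
      revert Hb. unfold Rabs. destruct (Rcase_abs _); lra.
  - apply is_lim_seq_const.
  - apply Hs. exact Hd.
Qed.
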